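(* Let $M$ be a faithful graded $R$-module and $U$ a proper graded submodule of $M$ such that $J_{gr}(M/U)$ is the zero submodule of $M/U$ and $J_{gr}(R)\subseteq (U:_RM)$. Then $U$ is a graded weakly $J_{gr}$-semiprime submodule of $M$ if and only if $(U:_RM)$ is a graded weakly $J_{gr}$-semiprime ideal of $R$.
   Context: Standing conventions: $\Gamma$ is a group, $R=\bigoplus_{g\in\Gamma}R_g$ is a commutative $\Gamma$-graded ring with identity, and $M=\bigoplus_{g\in\Gamma}M_g$ is a unitary $\Gamma$-graded $R$-module. $h(R)$, $h(M)$ are the homogeneous elements. A submodule $U$ is graded if $U=\bigoplus_g(U\cap M_g)$; $M/U$ has the induced grading. $M$ is faithful if $\mathrm{ann}_R(M)=\{r: rM=0\}=0$. $(U:_RM)=\{r\in R: rM\subseteq U\}$. For a graded module $N$, a graded submodule $U\neq N$ is Gr-maximal if every graded submodule between $U$ and $N$ equals $U$ or $N$; $J_{gr}(N)$ is the intersection of all Gr-maximal submodules of $N$ ($=N$ if none); $J_{gr}(R)$ is this for $N=R$. A proper graded submodule $U$ of $M$ is graded weakly $J_{gr}$-semiprime if whenever $r_g\in h(R)$, $m_h\in h(M)$, $n\in\mathbb{Z}^+$ and $0\neq r_g^nm_h\in U$, then $r_gm_h\in U+J_{gr}(M)$; a graded ideal of $R$ is graded weakly $J_{gr}$-semiprime if it is so as a submodule of the graded $R$-module $R$. *)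

(* Defs.v *)
From HB Require Import structures.
From mathcomp Require Import all_boot all_order all_algebra.
Set Implicit Arguments. Unset Strict Implicit. Unset Printing Implicit Defensive.
Import GRing.Theory.
Local Open Scope ring_scope.

Record group := Group {
  gcar :> Type;
  gmul : gcar -> gcar -> gcar;
  gone : gcar;
  ginv : gcar -> gcar;
  gmulA : forall x y z, gmul x (gmul y z) = gmul (gmul x y) z;
  gmul1 : forall x, gmul gone x = x;
  gmulV : forall x, gmul (ginv x) x = gone
}.

Section Graded.
Variable G : group.

Definition gr_addsubgroup (V : zmodType) (S : V -> Prop) : Prop :=
  S 0 /\ forall x y, S x -> S y -> S (x - y).

Definition is_direct_sum (V : zmodType) (S : G -> V -> Prop) : Prop :=
  (forall g, gr_addsubgroup (S g)) /\
  (forall x : V, exists n (gs : 'I_n -> G) (xs : 'I_n -> V),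
      injective gs /\ (forall i, S (gs i) (xs i)) /\ x = \sum_(i < n) xs i) /\
  (forall n (gs : 'I_n -> G) (xs : 'I_n -> V),
      injective gs -> (forall i, S (gs i) (xs i)) ->
      \sum_(i < n) xs i = 0 -> forall i, xs i = 0).

Definition graded_ring (R : comPzRingType) (Rg : G -> R -> Prop) : Prop :=
  is_direct_sum Rg /\
  forall g h (a b : R), Rg g a -> Rg h b -> Rg (gmul g h) (a * b).

Definition graded_module (R : comPzRingType) (Rg : G -> R -> Prop)
    (M : lmodType R) (Mg : G -> M -> Prop) : Prop :=
  is_direct_sum Mg /\
  forall g h (a : R) (m : M), Rg g a -> Mg h m -> Mg (gmul g h) (a *: m).

Variables (R : comPzRingType) (M : lmodType R) (Mg : G -> M -> Prop).

Definition gr_homogeneous (S : G -> M -> Prop) (x : M) : Prop := exists g, S g x.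

Definition gr_submod_closed (U : M -> Prop) : Prop :=
  U 0 /\ (forall x y, U x -> U y -> U (x - y)) /\
  (forall (r : R) x, U x -> U (r *: x)).

Definition graded_submodule (U : M -> Prop) : Prop :=
  gr_submod_closed U /\
  forall x, U x -> exists n (gs : 'I_n -> G) (xs : 'I_n -> M),
      injective gs /\ (forall i, Mg (gs i) (xs i) /\ U (xs i)) /\
      x = \sum_(i < n) xs i.

Definition gr_proper (U : M -> Prop) : Prop := exists x, ~ U x.

Definition gr_maximal (U : M -> Prop) : Prop :=
  graded_submodule U /\ gr_proper U /\
  forall V : M -> Prop, graded_submodule V -> (forall x, U x -> V x) ->
    (forall x, V x <-> U x) \/ (forall x, V x).

(* J_gr(M): intersection of all Gr-maximal submodules (= M if there is none). *)
Definition Jgr (x : M) : Prop := forall K, gr_maximal K -> K x.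

(* Preimage in M of J_gr(M/U): via the correspondence between graded
   submodules of M/U and graded submodules of M containing U. *)
Definition Jgr_quot (U : M -> Prop) (x : M) : Prop :=
  forall K, gr_maximal K -> (forall y, U y -> K y) -> K x.

Definition gr_colon (U : M -> Prop) (r : R) : Prop := forall m : M, U (r *: m).

Definition gr_faithful : Prop := forall r : R, (forall m : M, r *: m = 0) -> r = 0.

Definition gr_weakly_Jgr_semiprime (Rg : G -> R -> Prop) (U : M -> Prop) : Prop :=
  graded_submodule U /\ gr_proper U /\
  forall (r : R) (m : M) (n : nat),
    (exists g, Rg g r) -> gr_homogeneous Mg m -> (0 < n)%N ->
    r ^+ n *: m != 0 -> U (r ^+ n *: m) ->
    exists u j, U u /\ Jgr j /\ r *: m = u + j.

End Graded.

(* Main.v *)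
From HB Require Import structures.
From Stdlib Require Import ClassicalEpsilon Classical.
Require Import Defs.
From mathcomp Require Import all_boot all_order all_algebra.
Import GRing.Theory.
Local Open Scope ring_scope.

Definition geqb (G : group) (x y : G) : bool :=
  if excluded_middle_informative (x = y) then true else false.
Lemma geqP G : Equality.axiom (@geqb G).
Proof. move=> x y; rewrite /geqb; case: excluded_middle_informative => h;
  [exact: ReflectT | exact: ReflectF]. Qed.
HB.instance Definition _ (G : group) := hasDecEq.Build (gcar G) (@geqP G).

Section Grp.
Variable G : group.
Lemma gmulVr (x : G) : gmul x (ginv x) = gone G.
Proof.
set y := ginv x.
have E : gmul y (gmul x y) = y by rewrite gmulA gmulV gmul1.
by rewrite -(gmul1 (gmul x y)) -(gmulV y) -gmulA E gmulV.
Qed.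
Lemma gmul1r (x : G) : gmul x (gone G) = x.
Proof. by rewrite -(gmulV x) gmulA gmulVr gmul1. Qed.
Lemma gcancel_r (g g' h : G) : gmul g h = gmul g' h -> g = g'.
Proof.
move=> E; have := congr1 (fun z => gmul z (ginv h)) E => /=.
by rewrite -!gmulA gmulVr !gmul1r.
Qed.
End Grp.

Lemma closed_sum (V : zmodType) (P : V -> Prop) : P 0 ->
  (forall x y, P x -> P y -> P (x - y)) ->
  forall I (r : seq I) (Q : pred I) F, (forall i, Q i -> P (F i)) ->
  P (\sum_(i <- r | Q i) F i).
Proof.
move=> P0 PB I r Q F H; apply: big_ind => //.
move=> x y Px Py; have := PB x (0 - y) Px (PB 0 y P0 Py).
by rewrite sub0r opprK.
Qed.

Section Sums.
Variables (G : group) (V : zmodType) (S : G -> V -> Prop).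
Hypothesis HD : is_direct_sum S.

Lemma S_sum g I (r : seq I) (Q : pred I) F : (forall i, Q i -> S g (F i)) ->
  S g (\sum_(i <- r | Q i) F i).
Proof. by case: HD => /(_ g) [S0 SB] _; apply: closed_sum. Qed.

Lemma sum_partition (s : seq (G * V)) (D : seq G) : uniq D ->
  (forall p, p \in s -> p.1 \in D) ->
  \sum_(d <- D) \sum_(p <- s | p.1 == d) p.2 = \sum_(p <- s) p.2.
Proof.
move=> uD Hs.
transitivity (\sum_(d <- D) \sum_(p <- s) (if p.1 == d then p.2 else 0)).
  by apply: eq_bigr => d _; rewrite big_mkcond.
rewrite exchange_big /=; apply: eq_big_seq => p ps.
rewrite -big_mkcond /= (big_rem _ (Hs p ps)) eqxx big1_seq; first exact: addr0.
move=> d /andP [/eqP E]; by rewrite E mem_rem_uniq // inE eqxx.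
Qed.

Lemma indep_seq (D : seq G) (z : G -> V) : uniq D ->
  (forall d, d \in D -> S d (z d)) -> \sum_(d <- D) z d = 0 ->
  forall d, d \in D -> z d = 0.
Proof.
move=> uD Sz Hsum d dD.
case: HD => _ [_ Hind].
have := Hind (size D) (fun k => nth (gone G) D k) (fun k => z (nth (gone G) D k)).
have inj : injective (fun k : 'I_(size D) => nth (gone G) D k).
  by move=> k1 k2 /eqP; rewrite nth_uniq // => /eqP; apply: val_inj.
move=> /(_ inj) H.
have {}H := H (fun i => Sz _ (mem_nth _ (ltn_ord i))).
rewrite (big_nth (gone G)) big_mkord in Hsum.
move: (H Hsum) => /(_ (Ordinal (eq_ind_r is_true dD (index_mem d D)))) /=; rewrite nth_index //; exact.
Qed.

Lemma comp_zero (s : seq (G * V)) : (forall p, p \in s -> S p.1 p.2) ->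
  \sum_(p <- s) p.2 = 0 -> forall d, \sum_(p <- s | p.1 == d) p.2 = 0.
Proof.
move=> Ss H0 d.
apply: (@indep_seq (undup (d :: map fst s)) (fun d => \sum_(p <- s | p.1 == d) p.2)).
- exact: undup_uniq.
- move=> d' _; rewrite big_seq_cond; apply: S_sum => p /andP [ps /eqP <-]; exact: Ss.
- rewrite sum_partition ?undup_uniq // => p ps.
  by rewrite mem_undup inE; apply/orP; right; apply/mapP; exists p.
- by rewrite mem_undup inE eqxx.
Qed.

Lemma comp_eq (s1 s2 : seq (G * V)) : (forall p, p \in s1 -> S p.1 p.2) ->
  (forall p, p \in s2 -> S p.1 p.2) ->
  \sum_(p <- s1) p.2 = \sum_(p <- s2) p.2 ->
  forall d, \sum_(p <- s1 | p.1 == d) p.2 = \sum_(p <- s2 | p.1 == d) p.2.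
Proof.
move=> S1 S2 E d.
set s := s1 ++ [seq (p.1, - p.2) | p <- s2].
have Ss : forall p, p \in s -> S p.1 p.2.
  move=> p; rewrite mem_cat => /orP [/S1 //|/mapP [q qs ->]] /=.
  case: HD => /(_ q.1) [S0 SB] _; rewrite -sub0r; apply: SB => //; exact: S2.
have s0 : \sum_(p <- s) p.2 = 0 by rewrite big_cat big_map /= sumrN E subrr.
have := @comp_zero s Ss s0 d.
rewrite big_cat big_map /= sumrN => H; apply/eqP; rewrite -subr_eq0; exact/eqP.
Qed.

Lemma merge (P : V -> Prop) (P0 : P 0) (PB : forall x y, P x -> P y -> P (x - y))
  (s : seq (G * V)) x : (forall p, p \in s -> S p.1 p.2 /\ P p.2) ->
  x = \sum_(p <- s) p.2 ->
  exists n (gs : 'I_n -> G) (xs : 'I_n -> V),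
    injective gs /\ (forall i, S (gs i) (xs i) /\ P (xs i)) /\ x = \sum_(i < n) xs i.
Proof.
move=> Hs ->.
set D := undup (map fst s).
set z := fun d => \sum_(p <- s | p.1 == d) p.2.
have uD : uniq D by exact: undup_uniq.
exists (size D), (fun k => nth (gone G) D k), (fun k => z (nth (gone G) D k)).
split; [|split].
- by move=> k1 k2 /eqP; rewrite nth_uniq // => /eqP; apply: val_inj.
- move=> i; rewrite /z big_seq_cond; split.
    by apply: S_sum => p /andP [ps /eqP <-]; case: (Hs p ps).
  by apply: closed_sum => // p /andP [ps _]; case: (Hs p ps).
- rewrite -(big_mkord xpredT (fun k => z (nth (gone G) D k))).
  rewrite -(big_nth (gone G) xpredT z) sum_partition // => p ps; rewrite mem_undup; apply/mapP; by exists p.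
Qed.
End Sums.

Section Main.
Variables (G : group) (R : comPzRingType) (Rg : G -> R -> Prop)
    (M : lmodType R) (Mg : G -> M -> Prop).
Hypotheses (HR : graded_ring Rg) (HM : graded_module Rg Mg).

Lemma sub_add (V : lmodType R) (U : V -> Prop) : gr_submod_closed U ->
  forall x y, U x -> U y -> U (x + y).
Proof.
move=> [U0 [UB _]] x y Ux Uy; have := UB x (0 - y) Ux (UB 0 y U0 Uy).
by rewrite sub0r opprK.
Qed.

Lemma sub_sum (V : lmodType R) (U : V -> Prop) : gr_submod_closed U ->
  forall I (r : seq I) (Q : pred I) F, (forall i, Q i -> U (F i)) ->
  U (\sum_(i <- r | Q i) F i).
Proof. by move=> [U0 [UB _]]; apply: closed_sum. Qed.

Lemma PS (K : M -> Prop) : gr_maximal Mg K -> forall g h a m,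
  Rg g a -> Mg h m -> K (a *: m) -> K m \/ forall x, K (a *: x).
Proof.
move=> [[KC Kdec] [_ Kmax]] g h a m Ra Mm Kam.
have [K0 [KB KZ]] := KC.
case: (classic (K m)) => [|nKm]; [by left|right].
pose W := fun x => exists k r, K k /\ x = k + r *: m.
have KW : forall x, K x -> W x.
  by move=> x Kx; exists x, 0; rewrite scale0r addr0.
have Wm : W m by exists 0, 1; rewrite scale1r add0r.
have WC : gr_submod_closed W.
  split; first exact: KW.
  split.
    move=> x y [k1 [r1 [K1 ->]]] [k2 [r2 [K2 ->]]].
    exists (k1 - k2), (r1 - r2); split; first exact: KB.
    by rewrite scalerBl opprD addrACA.
  move=> r x [k [r1 [K1 ->]]]; exists (r *: k), (r * r1); split; first exact: KZ.
  by rewrite scalerDr scalerA.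
have Wgr : graded_submodule Mg W.
  split=> // x [k [r [Kk ->]]].
  have [n [fs [ks [_ [Hks ->]]]]] := Kdec k Kk.
  have [_ [Rdec _]] := HR.1.
  have [n' [gs [rs [_ [Hrs ->]]]]] := Rdec r.
  apply: (@merge _ _ _ HM.1 W WC.1 WC.2.1
     ([seq (fs i, ks i) | i <- index_enum 'I_n] ++
      [seq (gmul (gs i) h, rs i *: m) | i <- index_enum 'I_n'])).
  - move=> p; rewrite mem_cat => /orP [] /mapP [i _ ->] /=.
      by case: (Hks i) => ? ?; split => //; apply: KW.
    split; first exact: HM.2.
    by exists 0, (rs i); rewrite add0r.
  - by rewrite big_cat !big_map /= scaler_suml.
case: (Kmax W Wgr KW) => [HW | HW]; first by exfalso; apply nKm; apply/HW.
move=> x; case: (HW x) => k [r [Kk ->]].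
rewrite scalerDr scalerA mulrC -scalerA.
apply: (@sub_add _ K KC); [exact: KZ | exact: KZ].
Qed.

Lemma CP (K : M -> Prop) : gr_maximal Mg K -> forall g h a b,
  Rg g a -> Rg h b -> (forall x, K ((a * b) *: x)) ->
  (forall x, K (a *: x)) \/ (forall x, K (b *: x)).
Proof.
move=> Kmax g h a b Ra Rb Hab.
case: (classic (forall x, K (b *: x))) => [|nb]; [by right | left].
apply: NNPP => na; apply: nb => x.
have [_ [Mdec _]] := HM.1.
have [n [hs [xs [_ [Hxs ->]]]]] := Mdec x.
rewrite scaler_sumr; apply: (@sub_sum _ K Kmax.1.1) => i _.
apply: NNPP => nbi.
have Kab : K (a *: (b *: xs i)) by rewrite scalerA.
case: (@PS K Kmax _ _ _ _ Ra (HM.2 _ _ _ _ Rb (Hxs i)) Kab) => //.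
Qed.

End Main.

Lemma Jgr0 (G : group) (R : comPzRingType) (V : lmodType R) (Vg : G -> V -> Prop) :
  Jgr Vg 0.
Proof. by move=> K [[[K0 _] _] _]. Qed.

Theorem theorem2p19 (G : group) (R : comPzRingType) (Rg : G -> R -> Prop)
    (M : lmodType R) (Mg : G -> M -> Prop) (U : M -> Prop) :
  graded_ring Rg -> graded_module Rg Mg ->
  gr_faithful M ->
  graded_submodule Mg U -> gr_proper U ->
  (forall x : M, Jgr_quot Mg U x -> U x) ->
  (forall r : R, Jgr (Rg : G -> R^o -> Prop) r -> gr_colon U r) ->
  gr_weakly_Jgr_semiprime Mg Rg U <->
  gr_weakly_Jgr_semiprime (Rg : G -> R^o -> Prop) Rg (gr_colon U : R^o -> Prop).
Proof.
move=> HR HM _ HU HUp HJ _.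
have UC := HU.1.
have [U0 [UB UZ]] := UC.
split=> _.
- split; [|split].
  + split.
      split; first by move=> m; rewrite scale0r.
      split.
        by move=> x y Hx Hy m; rewrite scalerBl; apply: UB.
      move=> r x Hx m; change (U ((r * x) *: m)); rewrite -scalerA; exact: UZ.
    move=> r Hr.
    have [_ [Rdec _]] := HR.1.
    have [n [gs [rs [Ginj [Hrs Hsum]]]]] := Rdec r.
    exists n, gs, rs; split=> //; split=> // i; split; first exact: Hrs.
    move=> m.
    have [_ [Mdec _]] := HM.1.
    have [n' [hs [ms [_ [Hms ->]]]]] := Mdec m.
    rewrite scaler_sumr; apply: (@sub_sum _ _ U UC) => j _.
    have [n2 [fs [us [_ [Hus Hsum2]]]]] := HU.2 _ (Hr (ms j)).
    have E := @comp_eq G M Mg HM.1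
      [seq (gmul (gs i') (hs j), rs i' *: ms j) | i' <- index_enum 'I_n]
      [seq (fs k, us k) | k <- index_enum 'I_n2].
    have {}E := E _ _ _ (gmul (gs i) (hs j)).
    rewrite !big_map /= in E.
    have L : \sum_(i' <- index_enum 'I_n | gmul (gs i') (hs j) == gmul (gs i) (hs j))
        rs i' *: ms j = rs i *: ms j.
      rewrite (eq_bigl (fun i' => i' == i)) ?big_pred1_eq // => i'.
      case: (i' =P i) => [->|ne]; first exact: eqxx.
      apply/eqP => E0; apply: ne; exact: Ginj (@gcancel_r _ _ _ _ E0).
    rewrite L in E.
    rewrite E. apply: (@sub_sum R M U UC _ (index_enum _) _ us) => k _; exact: (Hus k).2.
    * by move=> p /mapP [i' _ ->] /=; apply: HM.2.
    * by move=> p /mapP [k _ ->] /=; apply: (Hus k).1.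
    * by rewrite -scaler_suml -Hsum.
  + case: HUp => x nUx; exists 1 => H; apply: nUx; have := H x; by rewrite scale1r.
  + move=> r s n [g Rr] [h Rs] n0 _ Hc.
    exists (r * s), 0; split; [|split]; last by rewrite addr0.
    * move=> m; apply: HJ => K Kmax KU.
      have key : forall k, (forall x, K ((r ^+ k * s) *: x)) ->
          (forall x, K (r *: x)) \/ (forall x, K (s *: x)).
        elim=> [|k IH] H.
          by right => x; have := H x; rewrite expr0 mul1r.
        have [g' Rk] : exists g', Rg g' (r ^+ k * s).
          elim: (k) => [|k' [g'' IH']]; first by exists h; rewrite expr0 mul1r.
          by exists (gmul g g''); rewrite exprS -mulrA; apply: HR.2.
        have Hk : forall x, K ((r * (r ^+ k * s)) *: x).
          by move=> x; rewrite mulrA -exprS; exact: H.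
        case: (@CP G R Rg M Mg HR HM K Kmax _ _ _ _ Rr Rk Hk) => [Hl|Hr'].
          by left.
        exact: IH Hr'.
      case: (key n (fun x => KU _ (Hc x))) => H.
        by rewrite -scalerA; apply: H.
      by rewrite mulrC -scalerA; apply: H.
    * exact: Jgr0.
- split; [exact: HU | split; first exact: HUp].
  move=> r m n [g Rr] [h Mm] n0 _ Hu.
  exists (r *: m), 0; split; [|split]; last by rewrite addr0.
  + apply: HJ => K Kmax KU.
    have [[KC _] _] := Kmax.
    have key : forall k, K (r ^+ k *: m) -> K (r *: m).
      elim=> [|k IH] H.
        by rewrite expr0 scale1r in H; apply: KC.2.2.
      have [h' Mk] : exists h', Mg h' (r ^+ k *: m).
        elim: (k) => [|k' [h'' IH']]; first by exists h; rewrite expr0 scale1r.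
        by exists (gmul g h''); rewrite exprS -scalerA; apply: HM.2.
      rewrite exprS -scalerA in H.
      case: (@PS G R Rg M Mg HR HM K Kmax _ _ _ _ Rr Mk H) => [/IH //|]; by apply.
    exact: (key n (KU _ Hu)).
  + exact: Jgr0.
Qed.
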